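(* Let $\gamma\in\mathcal{C}\cap C^{1,1}(\mathbb{S}_1,\mathbb{R}^d)$ with $\Delta[\gamma]>0$, let $L=1$, and let $n$ be so large that $2L\Delta[\gamma]^{-1}n^{-1}\le\pi/6$. If $x=\gamma(s)$, $y=\gamma(t)$, $z=\gamma(u)$ with $s<t<u$, $|t-s|\le 2L/n$ and $|u-t|\le 2L/n$, then $$\kappa_d(x,y,z)\le\big(1+16L^2\Delta[\gamma]^{-2}n^{-2}\big)\Delta[\gamma]^{-1}.$$
   Context: $\mathbb{S}_1=\mathbb{R}/\mathbb{Z}$. $\mathcal{C}$ is the set of $\gamma\in W^{1,\infty}(\mathbb{S}_1,\mathbb{R}^d)$ with $|\gamma'|=1$ a.e.; $C^{1,1}$ means $\gamma'$ Lipschitz. For pairwise distinct $x,y,z$, $r(x,y,z)$ is the radius of the circle through $x,y,z$ ($=\infty$ if collinear), and $\Delta[\gamma]=\inf\{r(x,y,z): x,y,z\in\gamma(\mathbb{S}_1)\text{ pairwise distinct}\}$. For three points $x,y,z$ with $\phi=\measuredangle(y-x,z-y)$, $\kappa_d(x,y,z)=\frac{2\tan(\phi/2)}{(|x-y|+|z-y|)/2}$. *)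

(* Defs.v *)
From Stdlib Require Import Reals Lra.
Open Scope R_scope.

(* Points of R^d are encoded as functions nat -> R whose coordinates of
   index >= d vanish (see [in_Rd]). *)
Definition Vec := nat -> R.

Definition in_Rd (d : nat) (x : Vec) : Prop := forall i, (d <= i)%nat -> x i = 0.

Definition vsub (x y : Vec) : Vec := fun i => x i - y i.

Fixpoint dot (d : nat) (x y : Vec) : R :=
  match d with
  | O => 0
  | S k => dot k x y + x k * y k
  end.

Definition norm (d : nat) (x : Vec) : R := sqrt (dot d x x).

Inductive ExtR := Fin (r : R) | PInf.

Definition Rext_le (a b : ExtR) : Prop :=
  match a, b with
  | _, PInf => True
  | PInf, Fin _ => False
  | Fin x, Fin y => x <= y
  end.

Definition Rext_pos (a : ExtR) : Prop :=
  match a with Fin x => 0 < x | PInf => True end.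

Definition Rext_inv (a : ExtR) : R :=
  match a with Fin x => / x | PInf => 0 end.

(* Radius of the circle through x, y, z (+oo if collinear):
   r = |x-y| |y-z| |z-x| / (4 * area), with
   (2 * area)^2 = |y-x|^2 |z-x|^2 - ((y-x).(z-x))^2  (Gram determinant). *)
Definition gram (d : nat) (x y z : Vec) : R :=
  let a := vsub y x in let b := vsub z x in
  dot d a a * dot d b b - (dot d a b) ^ 2.

Definition circumradius (d : nat) (x y z : Vec) : ExtR :=
  if Req_EM_T (gram d x y z) 0 then PInf
  else Fin (norm d (vsub x y) * norm d (vsub y z) * norm d (vsub z x)
            / (2 * sqrt (gram d x y z))).

(* D = Delta[gamma] = inf { r(x,y,z) : x,y,z in gamma(S_1) pairwise distinct }
   (infimum in [0,+oo]). *)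
Definition is_Delta (d : nat) (gamma : R -> Vec) (D : ExtR) : Prop :=
  (forall s t u, gamma s <> gamma t -> gamma t <> gamma u -> gamma s <> gamma u ->
      Rext_le D (circumradius d (gamma s) (gamma t) (gamma u))) /\
  (forall E, (forall s t u, gamma s <> gamma t -> gamma t <> gamma u ->
                 gamma s <> gamma u ->
                 Rext_le E (circumradius d (gamma s) (gamma t) (gamma u))) ->
             Rext_le E D).

Definition angle (d : nat) (a b : Vec) : R :=
  acos (dot d a b / (norm d a * norm d b)).

Definition kappa_d (d : nat) (x y z : Vec) : R :=
  2 * tan (angle d (vsub y x) (vsub z y) / 2)
    / ((norm d (vsub x y) + norm d (vsub z y)) / 2).

(* gamma : R -> R^d, 1-periodic (i.e. a map on S_1 = R/Z), arclength
   parametrized (|gamma'| = 1) and of class C^{1,1} (gamma' Lipschitz). *)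
Definition arclength_C11_closed_curve (d : nat) (gamma : R -> Vec) : Prop :=
  (forall s, in_Rd d (gamma s)) /\
  (forall s, gamma (s + 1) = gamma s) /\
  exists gamma' : R -> Vec,
    (forall s i, derivable_pt_lim (fun t => gamma t i) s (gamma' s i)) /\
    (forall s, norm d (gamma' s) = 1) /\
    (exists K, forall s t, norm d (vsub (gamma' s) (gamma' t)) <= K * Rabs (s - t)).

(* Main.v *)
Require Import Defs.
From Stdlib Require Import Reals Lra Psatz Classical.
From Coquelicot Require Coquelicot.
Open Scope R_scope.

Lemma dot_nonneg d x : 0 <= dot d x x.
Proof. induction d; simpl; nra. Qed.

Lemma dot_sym d x y : dot d x y = dot d y x.
Proof. induction d; simpl; [ring| rewrite IHd; ring]. Qed.

Lemma dot_ext d x x' y y' : (forall i, x i = x' i) -> (forall i, y i = y' i) -> dot d x y = dot d x' y'.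
Proof. intros H1 H2; induction d; simpl; [ring| rewrite IHd, H1, H2; ring]. Qed.

Lemma dot_lin2 d x y z a b : dot d (fun i => a * x i + b * y i) z = a * dot d x z + b * dot d y z.
Proof. induction d; simpl; [ring| rewrite IHd; ring]. Qed.

Lemma dot_scal_l d x z a : dot d (fun i => a * x i) z = a * dot d x z.
Proof. induction d; simpl; [ring| rewrite IHd; ring]. Qed.

Lemma dot_opp_l d x z : dot d (fun i => - x i) z = - dot d x z.
Proof. induction d; simpl; [ring| rewrite IHd; ring]. Qed.

Lemma dot_opp_r d x z : dot d z (fun i => - x i) = - dot d z x.
Proof. induction d; simpl; [ring| rewrite IHd; ring]. Qed.

Lemma dot_vsub_swap d x y : dot d (vsub x y) (vsub x y) = dot d (vsub y x) (vsub y x).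
Proof. unfold vsub; induction d; simpl; [ring| rewrite IHd; ring]. Qed.

Lemma dot_vsub_swap_r d e x y : dot d e (vsub x y) = - dot d e (vsub y x).
Proof. unfold vsub; induction d; simpl; [ring| rewrite IHd; ring]. Qed.

Lemma dot_zero_r d x : dot d x (fun _ => 0) = 0.
Proof. induction d; simpl; [ring| rewrite IHd; ring]. Qed.

Lemma CS d x y : (dot d x y)^2 <= dot d x x * dot d y y.
Proof.
  induction d; simpl. nra.
  set (P := dot d x y) in *. set (X := dot d x x) in *. set (Y := dot d y y) in *.
  assert (HX : 0 <= X) by apply dot_nonneg. assert (HY : 0 <= Y) by apply dot_nonneg.
  set (a := x d) in *; set (b := y d).
  assert (H1 : (2*P*a*b)^2 <= (X*b*b + a*a*Y)^2).
  { assert (0 <= (X*b*b - a*a*Y)^2) by apply pow2_ge_0.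
    assert (P^2 * (a*a*b*b) <= X*Y*(a*a*b*b)) by (apply Rmult_le_compat_r; nra).
    nra. }
  assert (H2 : 2*P*a*b <= X*b*b + a*a*Y).
  { assert (0 <= X*b*b + a*a*Y) by nra.
    destruct (Rle_dec (2*P*a*b) (X*b*b + a*a*Y)) as [h|h]; [exact h|].
    exfalso. apply Rnot_le_lt in h.
    assert ((X*b*b + a*a*Y)*(X*b*b + a*a*Y) < (2*P*a*b)*(2*P*a*b)).
    { apply Rmult_le_0_lt_compat; lra. }
    nra. }
  nra.
Qed.

Lemma dot_expand3 d w e f a b : dot d (fun i => w i - a * e i - b * f i) (fun i => w i - a * e i - b * f i)
     = dot d w w - 2*a*dot d e w - 2*b*dot d f w + a*a*dot d e e + b*b*dot d f f + 2*a*b*dot d e f.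
Proof. induction d; simpl; [ring| rewrite IHd; ring]. Qed.

Lemma Bessel d e f w : dot d e e = 1 -> dot d f f = 1 -> dot d e f = 0 ->
  (dot d e w)^2 + (dot d f w)^2 <= dot d w w.
Proof.
  intros He Hf Hef.
  set (a := dot d e w); set (b := dot d f w).
  pose proof (dot_nonneg d (fun i => w i - a * e i - b * f i)) as H.
  rewrite dot_expand3, He, Hf, Hef in H. fold a b in H. nra.
Qed.

Lemma dot_deriv d v (G G' : R -> Vec) c tau :
  (forall i, derivable_pt_lim (fun t => G t i) tau (G' tau i)) ->
  derivable_pt_lim (fun r => dot d v (vsub (G r) c)) tau (dot d v (G' tau)).
Proof.
  intros HD. induction d; simpl.
  - exact (derivable_pt_lim_const 0 tau).
  - replace (dot d v (G' tau) + v d * G' tau d) with (dot d v (G' tau) + v d * (G' tau d - 0)) by ring.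
    apply (derivable_pt_lim_plus (fun r => dot d v (vsub (G r) c)) (fun r => v d * vsub (G r) c d)).
    exact IHd.
    apply (derivable_pt_lim_scal (fun r => vsub (G r) c d)).
    apply (derivable_pt_lim_minus (fun r => G r d) (fct_cte (c d))).
    apply HD. apply derivable_pt_lim_const.
Qed.

Section Curve.
Variables (d : nat) (G G' : R -> Vec).
Hypothesis HD : forall s i, derivable_pt_lim (fun t => G t i) s (G' s i).
Hypothesis HN : forall s, dot d (G' s) (G' s) = 1.

Lemma mvt_bound a b : a < b -> dot d (vsub (G b) (G a)) (vsub (G b) (G a)) <= (b - a)^2.
Proof.
  intros Hab.
  set (v := vsub (G b) (G a)).
  destruct (MVT_cor2 (fun r => dot d v (vsub (G r) (G a))) (fun r => dot d v (G' r)) a b Hab)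
    as [c [Hc _]].
  { intros c _. apply dot_deriv. intros i; apply HD. }
  assert (H0 : dot d v (vsub (G a) (G a)) = 0).
  { rewrite (dot_ext d v v (vsub (G a) (G a)) (fun _ => 0)); [apply dot_zero_r|reflexivity|].
    intros i; unfold vsub; ring. }
  rewrite H0 in Hc. fold v in Hc.
  pose proof (CS d v (G' c)) as HC. rewrite HN in HC.
  set (W := dot d v v) in *. set (g := dot d v (G' c)) in *.
  assert (HW : 0 <= W) by apply dot_nonneg.
  assert (W * W <= W * (b - a)^2).
  { replace (W*W) with ((g*(b-a))^2) by (rewrite <- Hc; ring).
    assert (g^2 * (b-a)^2 <= W*1*(b-a)^2) by (apply Rmult_le_compat_r; [apply pow2_ge_0|lra]).
    nra. }
  destruct (Req_dec W 0) as [E|E]. rewrite E; apply pow2_ge_0.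
  apply (Rmult_le_reg_l W); lra.
Qed.

Lemma mvt_bound_abs a b : dot d (vsub (G b) (G a)) (vsub (G b) (G a)) <= (b - a)^2.
Proof.
  destruct (Rtotal_order a b) as [h|[h|h]].
  - now apply mvt_bound.
  - subst. rewrite (dot_ext d _ (fun _ => 0) _ (fun _ => 0)); try (intros; unfold vsub; ring).
    rewrite dot_zero_r. nra.
  - rewrite dot_vsub_swap. replace ((b-a)^2) with ((a-b)^2) by ring. now apply mvt_bound.
Qed.

End Curve.
Module M3.
Import Coquelicot.Coquelicot.

Lemma dot_lim d (x y : nat -> Vec) (X Y : Vec) :
  (forall i, is_lim_seq (fun k => x k i) (X i)) ->
  (forall i, is_lim_seq (fun k => y k i) (Y i)) ->
  is_lim_seq (fun k => dot d (x k) (y k)) (dot d X Y).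
Proof.
  intros Hx Hy. induction d; simpl.
  - apply is_lim_seq_const.
  - apply is_lim_seq_plus'. exact IHd. apply is_lim_seq_mult'. apply Hx. apply Hy.
Qed.

Lemma inv_lim : is_lim_seq (fun k => / INR (S k)) 0.
Proof.
  apply is_lim_seq_spec. intros eps.
  destruct (archimed_cor1 eps (cond_pos eps)) as [N [HN HN0]].
  exists N. intros n Hn.
  rewrite Rminus_0_r. rewrite Rabs_right.
  2:{ apply Rle_ge, Rlt_le, Rinv_0_lt_compat, lt_0_INR; lia. }
  apply Rle_lt_trans with (/ INR N); [|exact HN].
  apply Rinv_le_contravar. apply lt_0_INR; lia. apply le_INR; lia.
Qed.

Lemma dq_lim f x l : derivable_pt_lim f x l ->
  is_lim_seq (fun k => (f (x + / INR (S k)) - f x) / / INR (S k)) l.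
Proof.
  intros H. apply is_lim_seq_spec. intros eps.
  destruct (H eps (cond_pos eps)) as [del Hd].
  pose proof inv_lim as HL. apply is_lim_seq_spec in HL.
  destruct (HL (mkposreal del (cond_pos del))) as [N HN].
  exists N. intros n Hn. apply Hd.
  apply Rgt_not_eq, Rinv_0_lt_compat, lt_0_INR; lia.
  specialize (HN n Hn). simpl in HN. rewrite Rminus_0_r in HN. exact HN.
Qed.

Definition Kprop d (G : R -> Vec) lam := forall a b c,
  4 * gram d (G a) (G b) (G c) <=
  lam^2 * dot d (vsub (G a) (G b)) (vsub (G a) (G b)) * dot d (vsub (G b) (G c)) (vsub (G b) (G c))
        * dot d (vsub (G c) (G a)) (vsub (G c) (G a)).

Lemma dot_scal_r d x z a : dot d z (fun i => a * x i) = a * dot d z x.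
Proof. rewrite dot_sym, dot_scal_l, dot_sym; reflexivity. Qed.

Lemma tangent_point d (G G' : R -> Vec) lam
  (HD : forall s i, derivable_pt_lim (fun t => G t i) s (G' s i))
  (HK : Kprop d G lam) sig tau :
  4 * (dot d (G' sig) (G' sig) * dot d (vsub (G tau) (G sig)) (vsub (G tau) (G sig))
       - (dot d (G' sig) (vsub (G tau) (G sig)))^2)
  <= lam^2 * dot d (G' sig) (G' sig) * dot d (vsub (G tau) (G sig)) (vsub (G tau) (G sig))
       * dot d (vsub (G tau) (G sig)) (vsub (G tau) (G sig)).
Proof.
  set (w := vsub (G tau) (G sig)). set (e := G' sig).
  set (h := fun k => / INR (S k)).
  set (a := fun k i => (G (sig + h k) i - G sig i) / h k).
  set (b := fun k i => G sig i + h k * a k i - G tau i).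
  assert (Hh : forall k, 0 < h k) by (intros; apply Rinv_0_lt_compat, lt_0_INR; lia).
  assert (Ha : forall i, is_lim_seq (fun k => a k i) (e i)).
  { intros i. apply (dq_lim (fun t => G t i)). apply HD. }
  assert (Hb : forall i, is_lim_seq (fun k => b k i) (G sig i + 0 * e i - G tau i)).
  { intros i. apply is_lim_seq_minus'. apply is_lim_seq_plus'. apply is_lim_seq_const.
    apply is_lim_seq_mult'. apply inv_lim. apply Ha. apply is_lim_seq_const. }
  assert (Hw : forall i, is_lim_seq (fun k => w i) (w i)) by (intros; apply is_lim_seq_const).
  set (W := dot d w w).
  assert (Hineq : forall k, 0 <= lam^2 * dot d (a k) (a k) * dot d (b k) (b k) * W
                     - 4 * (dot d (a k) (a k) * W - (dot d (a k) w)^2)).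
  { intros k. specialize (HK sig (sig + h k) tau).
    assert (E1 : forall i, vsub (G (sig + h k)) (G sig) i = h k * a k i).
    { intros i. unfold vsub, a. field. apply Rgt_not_eq, Hh. }
    unfold gram in HK.
    rewrite (dot_ext d _ (fun i => h k * a k i) _ (fun i => h k * a k i) E1 E1) in HK.
    rewrite (dot_ext d _ (fun i => h k * a k i) (vsub (G tau) (G sig)) w E1 (fun i => eq_refl)) in HK.
    rewrite (dot_vsub_swap d (G sig)) in HK.
    rewrite (dot_ext d _ (fun i => h k * a k i) _ (fun i => h k * a k i) E1 E1) in HK.
    rewrite (dot_ext d (vsub (G (sig + h k)) (G tau)) (b k) _ (b k)) in HK.
    2, 3: intros i; unfold b, vsub; rewrite <- (E1 i); unfold vsub; ring.
    fold w W in HK.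
    rewrite !dot_scal_l, !dot_scal_r in HK.
    set (AA := dot d (a k) (a k)) in *. set (P := dot d (a k) w) in *. set (BB := dot d (b k) (b k)) in *.
    assert (Hp := Hh k). set (hk := h k) in *.
    assert (hk^2 * (4 * (AA * W - P^2)) <= hk^2 * (lam ^ 2 * AA * BB * W)) by nra.
    apply Rmult_le_reg_l in H. lra. nra. }
  assert (HL2 : is_lim_seq (fun k => lam^2 * dot d (a k) (a k) * dot d (b k) (b k) * W
                     - 4 * (dot d (a k) (a k) * W - (dot d (a k) w)^2))
         (lam^2 * dot d e e * dot d (fun i => G sig i + 0 * e i - G tau i) (fun i => G sig i + 0 * e i - G tau i) * W
                     - 4 * (dot d e e * W - (dot d e w)^2))).
  { apply is_lim_seq_minus'. apply is_lim_seq_mult'. apply is_lim_seq_mult'. apply is_lim_seq_mult'.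
    apply is_lim_seq_const. apply dot_lim; auto. apply dot_lim; auto. apply is_lim_seq_const.
    apply is_lim_seq_mult'. apply is_lim_seq_const. apply is_lim_seq_minus'.
    apply is_lim_seq_mult'. apply dot_lim; auto. apply is_lim_seq_const.
    replace ((dot d e w)^2) with (dot d e w * (dot d e w * 1)) by ring.
    apply is_lim_seq_mult'. apply dot_lim; auto. apply is_lim_seq_mult'. apply dot_lim; auto.
    apply is_lim_seq_const. }
  assert (HL := is_lim_seq_le (fun _ => 0) _ 0 _ Hineq (is_lim_seq_const 0) HL2). cbv beta iota in HL.
  assert (E : dot d (fun i => G sig i + 0 * e i - G tau i) (fun i => G sig i + 0 * e i - G tau i) = W).
  { unfold W, w. rewrite <- dot_vsub_swap. apply dot_ext; intros i; unfold vsub; ring. }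
  rewrite E in HL. unfold Rbar_le in HL. lra.
Qed.
End M3.
Import M3.

Section Sign.
Variables (d : nat) (G G' : R -> Vec) (lam R0 : R).
Hypothesis HD : forall s i, derivable_pt_lim (fun t => G t i) s (G' s i).
Hypothesis HN : forall s, dot d (G' s) (G' s) = 1.
Hypothesis HK : Kprop d G lam.
Hypothesis HR : 0 < R0.
Hypothesis Hk : lam^2 * R0^2 < 2.

Lemma S_lem sig tau : Rabs (tau - sig) <= R0 ->
  4 * (dot d (vsub (G tau) (G sig)) (vsub (G tau) (G sig)) - (dot d (G' sig) (vsub (G tau) (G sig)))^2)
  <= lam^2 * R0^2 * dot d (vsub (G tau) (G sig)) (vsub (G tau) (G sig)).
Proof.
  intros Ht.
  pose proof (tangent_point d G G' lam HD HK sig tau) as T. rewrite HN in T.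
  pose proof (mvt_bound_abs d G G' HD HN sig tau) as M.
  set (W := dot d (vsub (G tau) (G sig)) (vsub (G tau) (G sig))) in *.
  assert (HW : 0 <= W) by apply dot_nonneg.
  assert (H2 : (tau - sig)^2 <= R0^2).
  { rewrite <- pow2_abs. pose proof (Rabs_pos (tau - sig)). nra. }
  assert (lam^2 * W * W <= lam^2 * R0^2 * W).
  { assert (0 <= lam^2) by apply pow2_ge_0.
    assert (W * W <= R0^2 * W) by nra. nra. }
  lra.
Qed.

Lemma forward sig tau : sig < tau -> tau <= sig + R0 ->
  0 < dot d (G' sig) (vsub (G tau) (G sig)).
Proof.
  intros H1 H2.
  set (e := G' sig).
  set (g := fun r => dot d e (vsub (G r) (G sig))).
  assert (Hg : forall r, derivable_pt_lim g r (dot d e (G' r))).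
  { intros r. apply dot_deriv. intros i; apply HD. }
  assert (g0 : g sig = 0).
  { unfold g. rewrite (dot_ext d e e _ (fun _ => 0)); [apply dot_zero_r|reflexivity|].
    intros i; unfold vsub; ring. }
  change (0 < g tau).
  destruct (Rlt_le_dec 0 (g tau)) as [ok|bad]; [exact ok|exfalso].
  pose proof (Hg sig) as Hs. unfold e in Hs. rewrite HN in Hs.
  destruct (Hs (/2) ltac:(lra)) as [del Hdel].
  set (h := Rmin (del/2) ((tau - sig)/2)).
  assert (Hh0 : 0 < h) by (unfold h; apply Rmin_pos; [pose proof (cond_pos del); lra | lra]).
  assert (Hh1 : h < del) by (unfold h; pose proof (Rmin_l (del/2) ((tau-sig)/2)); pose proof (cond_pos del); lra).
  assert (Hh2 : h < tau - sig) by (unfold h; pose proof (Rmin_r (del/2) ((tau-sig)/2)); lra).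
  specialize (Hdel h ltac:(lra) ltac:(rewrite Rabs_right; lra)).
  rewrite g0, Rminus_0_r in Hdel.
  assert (Hgh : 0 < g (sig + h)).
  { apply Rabs_def2 in Hdel. destruct Hdel as [_ Hd].
    assert (h * /2 < h * (g (sig + h) / h)) by (apply Rmult_lt_compat_l; lra).
    replace (h * (g (sig + h) / h)) with (g (sig+h)) in H by (field; lra). lra. }
  assert (Hcont : forall c, sig <= c <= tau -> continuity_pt g c).
  { intros c _. apply derivable_continuous_pt. exact (exist _ _ (Hg c)). }
  destruct (continuity_ab_maj g sig tau ltac:(lra) Hcont) as [M [HM HMb]].
  assert (HgM : 0 < g M) by (pose proof (HM (sig + h) ltac:(lra)); lra).
  assert (HM1 : sig < M) by (destruct (Req_dec M sig); [subst; lra| lra]).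
  assert (HM2 : M < tau) by (destruct (Req_dec M tau); [subst; lra| lra]).
  assert (Hder : dot d e (G' M) = 0).
  { pose proof (deriv_maximum g sig tau M (exist _ _ (Hg M)) HM1 HM2
      ltac:(intros x Hx1 Hx2; apply HM; lra)) as Z.
    simpl in Z. exact Z. }
  pose proof (S_lem M sig ltac:(rewrite Rabs_left; lra)) as S1.
  pose proof (S_lem sig M ltac:(rewrite Rabs_right; lra)) as S2.
  pose proof (Bessel d e (G' M) (vsub (G sig) (G M)) (HN sig) (HN M) Hder) as B.
  rewrite dot_vsub_swap in S1. rewrite (dot_vsub_swap d (G sig)) in B.
  rewrite (dot_vsub_swap_r d e) in B.
  pose proof (CS d e (vsub (G M) (G sig))) as C. unfold e in C at 2. rewrite HN in C.
  fold e in S2. change (dot d e (vsub (G M) (G sig))) with (g M) in *.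
  set (W := dot d (vsub (G M) (G sig)) (vsub (G M) (G sig))) in *.
  set (g1 := dot d (G' M) (vsub (G sig) (G M))) in *.
  set (k := lam^2 * R0^2) in *.
  assert (HW : 0 < W) by nra.
  assert (0 < (2 - k) * W) by (apply Rmult_lt_0_compat; lra).
  nra.
Qed.

End Sign.

Lemma backward d (G G' : R -> Vec) lam R0
  (HD : forall s i, derivable_pt_lim (fun t => G t i) s (G' s i))
  (HN : forall s, dot d (G' s) (G' s) = 1)
  (HK : Kprop d G lam) (HR : 0 < R0) (Hk : lam^2 * R0^2 < 2) sig tau :
  tau < sig -> sig - R0 <= tau ->
  dot d (G' sig) (vsub (G tau) (G sig)) < 0.
Proof.
  intros H1 H2.
  set (G2 := fun r => G (- r)). set (G2' := fun r i => - G' (- r) i).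
  assert (HD2 : forall s i, derivable_pt_lim (fun t => G2 t i) s (G2' s i)).
  { intros s i. unfold G2, G2'.
    replace (- G' (- s) i) with (G' (- s) i * (-1)) by ring.
    apply (derivable_pt_lim_comp (opp_fct id) (fun t => G t i)).
    apply derivable_pt_lim_opp, derivable_pt_lim_id. apply HD. }
  assert (HN2 : forall s, dot d (G2' s) (G2' s) = 1).
  { intros s; unfold G2'. rewrite dot_opp_l, dot_opp_r, HN. ring. }
  assert (HK2 : Kprop d G2 lam) by (intros a b c; apply HK).
  pose proof (forward d G2 G2' lam R0 HD2 HN2 HK2 Hk (- sig) (- tau) ltac:(lra) ltac:(lra)) as F.
  unfold G2, G2' in F. rewrite !Ropp_involutive in F. rewrite dot_opp_l in F. lra.
Qed.

Lemma div_nonneg a b : 0 <= a -> 0 < b -> 0 <= a / b.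
Proof. intros; unfold Rdiv; apply Rmult_le_pos; [lra| left; apply Rinv_0_lt_compat; lra]. Qed.

Lemma final_ineq V1 V2 p lam eps :
  0 < V1 -> 0 < V2 -> 0 <= p -> p^2 <= V1 * V2 -> 0 <= lam ->
  4 * (V1 * V2 - p^2) <= lam^2 * V1 * V2 * (V1 + 2 * p + V2) ->
  lam^2 * (sqrt V1 + sqrt V2)^2 <= eps ->
  2 * tan (acos (p / (sqrt V1 * sqrt V2)) / 2) / ((sqrt V1 + sqrt V2) / 2) <= (1 + eps) * lam.
Proof.
  intros H1 H2 Hp Hpp Hl HK He.
  set (A := sqrt V1) in *. set (B := sqrt V2) in *.
  assert (HA : 0 < A) by (apply sqrt_lt_R0; lra).
  assert (HB : 0 < B) by (apply sqrt_lt_R0; lra).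
  assert (HA2 : A * A = V1) by (apply sqrt_sqrt; lra).
  assert (HB2 : B * B = V2) by (apply sqrt_sqrt; lra).
  set (P := A * B).
  assert (HP : 0 < P) by (apply Rmult_lt_0_compat; lra).
  assert (HP2 : P * P = V1 * V2) by (unfold P; rewrite <- HA2, <- HB2; ring).
  set (c := p / P).
  assert (Hpc : p = c * P) by (unfold c; field; lra).
  assert (Hc0 : 0 <= c) by (unfold c; apply div_nonneg; lra).
  assert (Hc1 : c <= 1).
  { destruct (Rle_dec c 1) as [h|h]; [exact h|exfalso].
    assert (P < p) by (rewrite Hpc; nra). nra. }
  assert (Hcb : -1 <= c <= 1) by lra.
  set (phi := acos c). set (th := phi / 2).
  pose proof (acos_bound c) as Hphi. fold phi in Hphi.
  assert (Hcos : cos phi = c) by (apply cos_acos; exact Hcb).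
  assert (Hsin : sin phi = sqrt (1 - c²)) by (apply sin_acos; exact Hcb).
  assert (Hphi2 : phi = 2 * th) by (unfold th; field).
  rewrite Hphi2 in Hcos, Hsin. rewrite sin_2a in Hsin. rewrite cos_2a_cos in Hcos.
  assert (Hs0 : 0 <= sin th) by (apply sin_ge_0; unfold th; lra).
  assert (Hc0' : 0 <= cos th) by (apply cos_ge_0; unfold th; lra).
  assert (Hct : 0 < cos th) by (destruct Hc0' as [h|h]; [exact h| rewrite <- h in Hcos; nra]).
  set (Sq := sqrt (1 - c²)) in *.
  assert (HSq0 : 0 <= Sq) by apply sqrt_pos.
  assert (HSq2 : Sq * Sq = 1 - c^2) by (unfold Sq; rewrite sqrt_sqrt; unfold Rsqr; [ring|unfold Rsqr; nra]).
  unfold tan. fold th.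
  set (T := sin th / cos th).
  assert (HT0 : 0 <= T) by (unfold T; apply div_nonneg; lra).
  assert (HT : T * (1 + c) = Sq) by (unfold T; rewrite <- Hsin; rewrite <- Hcos; field; lra).
  set (C2 := A*A + 2*c*A*B + B*B).
  assert (HK' : 4 * (1 - c^2) * (P*P) <= lam^2 * C2 * (P*P)).
  { unfold C2. rewrite HA2, HB2. replace (2*c*A*B) with (2*p) by (rewrite Hpc; unfold P; ring).
    replace (4 * (1 - c^2) * (P*P)) with (4 * (V1*V2 - p^2)) by (rewrite <- HP2, Hpc; ring).
    rewrite HP2. lra. }
  assert (HK2 : 4 * (1 - c^2) <= lam^2 * C2).
  { apply (Rmult_le_reg_r (P*P)); [apply Rmult_lt_0_compat; lra| exact HK']. }
  assert (HAB1 : 0 <= (1 - c) * (A * B)) by (apply Rmult_le_pos; nra).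
  assert (HAB2 : 0 <= c * (A * B)) by (apply Rmult_le_pos; nra).
  assert (HC2 : C2 <= (A + B)^2) by (unfold C2; simpl; lra).
  assert (HC20 : 0 <= C2) by (unfold C2; nra).
  set (S4 := 4 * (1 - c^2)) in *.
  assert (HS4e : S4 <= eps).
  { assert (lam^2 * C2 <= lam^2 * (A+B)^2) by (apply Rmult_le_compat_l; [apply pow2_ge_0|exact HC2]). lra. }
  assert (HS40 : 0 <= S4) by (unfold S4; nra).
  assert (Key : 2 <= (1 + S4) * (1 + c)).
  { unfold S4. assert (0 <= (1 - c) * (4*c*c + 8*c + 3)) by (apply Rmult_le_pos; nra). nra. }
  assert (HAB : 0 < A + B) by lra.
  assert (Goal2 : 4 * Sq <= (1 + eps) * lam * (A + B) * (1 + c)).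
  { assert (Q1 : 16 * (Sq * Sq) <= ((1 + eps) * lam * (A + B) * (1 + c))^2).
    { rewrite HSq2.
      assert (X1 : 16 * (1 - c^2) <= 4 * (lam^2 * (A+B)^2)) by
        (assert (lam^2 * C2 <= lam^2 * (A+B)^2) by (apply Rmult_le_compat_l; [apply pow2_ge_0|exact HC2]); unfold S4 in HK2; lra).
      assert (X2 : 4 <= ((1 + eps) * (1 + c))^2).
      { assert (2 <= (1+eps)*(1+c)) by nra. nra. }
      assert (X3 : 4 * (lam^2 * (A+B)^2) <= ((1 + eps) * (1 + c))^2 * (lam^2 * (A+B)^2))
        by (apply Rmult_le_compat_r; [nra|exact X2]).
      nra. }
    assert (0 <= (1 + eps) * lam * (A + B) * (1 + c)).
    { assert (0 <= 1 + eps) by lra. repeat apply Rmult_le_pos; lra. }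
    assert (0 <= 4 * Sq) by lra.
    destruct (Rle_dec (4 * Sq) ((1 + eps) * lam * (A + B) * (1 + c))) as [h|h]; [exact h|exfalso].
    apply Rnot_le_lt in h.
    assert (((1 + eps) * lam * (A + B) * (1 + c)) * ((1 + eps) * lam * (A + B) * (1 + c)) < (4*Sq)*(4*Sq))
      by (apply Rmult_le_0_lt_compat; lra).
    nra. }
  rewrite <- HT in Goal2.
  apply (Rmult_le_reg_r ((1 + c) * ((A + B) / 2))). nra.
  replace (2 * T / ((A + B) / 2) * ((1 + c) * ((A + B) / 2))) with (2 * (T * (1+c))) by (field; lra).
  nra.
Qed.

Lemma dot_expand2 d v1 v2 e a1 a2 : dot d (fun j => v1 j - a1 * e j) (fun j => v2 j - a2 * e j)
  = dot d v1 v2 - a2 * dot d v1 e - a1 * dot d e v2 + a1 * a2 * dot d e e.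
Proof. induction d; simpl; [ring| rewrite IHd; ring]. Qed.

Lemma pos_dot d e v1 v2 k : dot d e e = 1 -> 0 < dot d e v1 -> 0 < dot d e v2 -> k < 2 ->
  4 * (dot d v1 v1 - (dot d e v1)^2) <= k * dot d v1 v1 ->
  4 * (dot d v2 v2 - (dot d e v2)^2) <= k * dot d v2 v2 ->
  0 <= dot d v1 v2.
Proof.
  intros He H1 H2 Hk S1 S2.
  set (a1 := dot d e v1) in *. set (a2 := dot d e v2) in *.
  pose proof (CS d (fun j => v1 j - a1 * e j) (fun j => v2 j - a2 * e j)) as C.
  rewrite !dot_expand2, He in C.
  rewrite (dot_sym d v1 e), (dot_sym d v2 e) in C. fold a1 a2 in C.
  pose proof (CS d e v1) as C1. pose proof (CS d e v2) as C2. rewrite He in C1, C2. fold a1 a2 in C1, C2.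
  set (V1 := dot d v1 v1) in *. set (V2 := dot d v2 v2) in *. set (p := dot d v1 v2) in *.
  assert (U1 : V1 - a1^2 < a1^2).
  { assert (0 < a1^2) by (apply pow_lt; lra). nra. }
  assert (U2 : V2 - a2^2 < a2^2).
  { assert (0 < a2^2) by (apply pow_lt; lra). nra. }
  assert (X : (V1 - a1 * a1 - a1 * a1 + a1 * a1 * 1) * (V2 - a2 * a2 - a2 * a2 + a2 * a2 * 1) < (a1*a2)^2).
  { replace (V1 - a1 * a1 - a1 * a1 + a1 * a1 * 1) with (V1 - a1^2) by ring.
    replace (V2 - a2 * a2 - a2 * a2 + a2 * a2 * 1) with (V2 - a2^2) by ring.
    replace ((a1*a2)^2) with (a1^2 * a2^2) by ring.
    apply Rmult_le_0_lt_compat; lra. }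
  assert (Y : (p - a2 * a1 - a1 * a2 + a1 * a2 * 1)^2 < (a1 * a2)^2) by lra.
  replace (p - a2 * a1 - a1 * a2 + a1 * a2 * 1) with (p - a1*a2) in Y by ring.
  assert (0 < a1 * a2) by (apply Rmult_lt_0_compat; lra).
  destruct (Rle_dec 0 p) as [h|h]; [exact h|exfalso]. nra.
Qed.

Lemma gram_xx d x z : gram d x x z = 0.
Proof.
  unfold gram. rewrite (dot_ext d (vsub x x) (fun _ => 0) (vsub x x) (fun _ => 0)); try (intros; unfold vsub; ring).
  rewrite dot_zero_r. rewrite (dot_ext d (vsub x x) (fun _ => 0) (vsub z x) (vsub z x)); try (intros; unfold vsub; ring).
  rewrite (dot_sym d (fun _ => 0) (vsub z x)), dot_zero_r. ring.
Qed.

Lemma gram_yy d x y : gram d x y y = 0.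
Proof. unfold gram. ring. Qed.

Lemma gram_xzx d x y : gram d x y x = 0.
Proof.
  unfold gram. rewrite (dot_ext d (vsub x x) (fun _ => 0) (vsub x x) (fun _ => 0)); try (intros; unfold vsub; ring).
  rewrite dot_zero_r. rewrite (dot_ext d (vsub y x) (vsub y x) (vsub x x) (fun _ => 0)); try (intros; unfold vsub; ring).
  rewrite dot_zero_r. ring.
Qed.

Lemma K_from_Delta d gamma D : is_Delta d gamma D -> Rext_pos D -> Kprop d gamma (Rext_inv D).
Proof.
  intros [HD _] Hpos a b c.
  set (x := gamma a); set (y := gamma b); set (z := gamma c).
  assert (R0 : 0 <= Rext_inv D ^ 2 * dot d (vsub x y) (vsub x y) * dot d (vsub y z) (vsub y z)
                 * dot d (vsub z x) (vsub z x)).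
  { apply Rmult_le_pos; [apply Rmult_le_pos; [apply Rmult_le_pos; [apply pow2_ge_0|]|]|]; apply dot_nonneg. }
  destruct (classic (x = y)) as [E|E1]. { rewrite <- E in R0 |- *. rewrite gram_xx. lra. }
  destruct (classic (y = z)) as [E|E2]. { rewrite <- E in R0 |- *. rewrite gram_yy. lra. }
  destruct (classic (x = z)) as [E|E3]. { rewrite <- E in R0 |- *. rewrite gram_xzx. lra. }
  specialize (HD a b c E1 E2 E3). fold x y z in HD.
  unfold circumradius in HD.
  destruct (Req_EM_T (gram d x y z) 0) as [G0|G0]. { rewrite G0. lra. }
  destruct D as [r|]; [|contradiction]. simpl in HD, Hpos. change (Rext_inv (Fin r)) with (/ r) in *.
  destruct (Rlt_le_dec (gram d x y z) 0) as [Gn|Gp]. { lra. }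
  set (G := gram d x y z) in *.
  assert (Gp' : 0 < G) by lra.
  assert (Hs : 0 < sqrt G) by (apply sqrt_lt_R0; lra).
  unfold norm in HD.
  set (N1 := dot d (vsub x y) (vsub x y)) in *.
  set (N2 := dot d (vsub y z) (vsub y z)) in *.
  set (N3 := dot d (vsub z x) (vsub z x)) in *.
  assert (h1 : sqrt N1 * sqrt N1 = N1) by (apply sqrt_sqrt, dot_nonneg).
  assert (h2 : sqrt N2 * sqrt N2 = N2) by (apply sqrt_sqrt, dot_nonneg).
  assert (h3 : sqrt N3 * sqrt N3 = N3) by (apply sqrt_sqrt, dot_nonneg).
  assert (hG : sqrt G * sqrt G = G) by (apply sqrt_sqrt; lra).
  assert (HD' : r * (2 * sqrt G) <= sqrt N1 * sqrt N2 * sqrt N3).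
  { apply (Rmult_le_compat_r (2 * sqrt G)) in HD; [|lra].
    replace (sqrt N1 * sqrt N2 * sqrt N3 / (2 * sqrt G) * (2 * sqrt G)) with (sqrt N1 * sqrt N2 * sqrt N3) in HD by (field; lra).
    exact HD. }
  assert (HD2 : (r * (2 * sqrt G)) * (r * (2 * sqrt G)) <= (sqrt N1 * sqrt N2 * sqrt N3) * (sqrt N1 * sqrt N2 * sqrt N3)).
  { apply Rmult_le_compat; try lra; apply Rmult_le_pos; lra. }
  replace ((sqrt N1 * sqrt N2 * sqrt N3) * (sqrt N1 * sqrt N2 * sqrt N3)) with (N1 * N2 * N3) in HD2
    by (replace ((sqrt N1 * sqrt N2 * sqrt N3) * (sqrt N1 * sqrt N2 * sqrt N3)) with
          ((sqrt N1 * sqrt N1) * (sqrt N2 * sqrt N2) * (sqrt N3 * sqrt N3)) by ring; rewrite h1, h2, h3; ring).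
  replace ((r * (2 * sqrt G)) * (r * (2 * sqrt G))) with (4 * (sqrt G * sqrt G) * (r * r)) in HD2 by ring. rewrite hG in HD2.
  apply (Rmult_le_reg_r (r * r)). apply Rmult_lt_0_compat; lra.
  replace ((/ r) ^ 2 * N1 * N2 * N3 * (r * r)) with (N1 * N2 * N3) by (field; lra). exact HD2.
Qed.

Lemma dot_add_self d a b : dot d (fun i => a i + b i) (fun i => a i + b i) = dot d a a + 2 * dot d a b + dot d b b.
Proof. induction d; simpl; [ring| rewrite IHd; ring]. Qed.
Lemma dot_add_r d a b : dot d a (fun i => a i + b i) = dot d a a + dot d a b.
Proof. induction d; simpl; [ring| rewrite IHd; ring]. Qed.

Lemma vsub_split x y z : forall i, vsub z x i = vsub y x i + vsub z y i.
Proof. intros; unfold vsub; ring. Qed.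

Lemma gram_eq d x y z : gram d x y z =
  dot d (vsub y x) (vsub y x) * dot d (vsub z y) (vsub z y) - (dot d (vsub y x) (vsub z y))^2.
Proof.
  unfold gram.
  rewrite (dot_ext d (vsub z x) _ (vsub z x) _ (vsub_split x y z) (vsub_split x y z)).
  rewrite (dot_ext d (vsub y x) (vsub y x) (vsub z x) _ (fun i => eq_refl) (vsub_split x y z)).
  rewrite dot_add_self, dot_add_r. ring.
Qed.

Theorem mainTheorem16 (d : nat) (gamma : R -> Vec) (D : ExtR) (n : nat)
  (s t u : R) :
  arclength_C11_closed_curve d gamma ->
  is_Delta d gamma D ->
  Rext_pos D ->
  (0 < n)%nat ->
  2 * 1 * Rext_inv D * / INR n <= PI / 6 ->
  s < t -> t < u ->
  Rabs (t - s) <= 2 * 1 / INR n ->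
  Rabs (u - t) <= 2 * 1 / INR n ->
  kappa_d d (gamma s) (gamma t) (gamma u)
    <= (1 + 16 * 1 ^ 2 * Rext_inv D ^ 2 * / INR n ^ 2) * Rext_inv D.
Proof.
  intros Hc HDel Hpos Hn Hlam Hst Htu Hts Hut.
  destruct Hc as [_ [_ [g' [HD [HN1 _]]]]].
  assert (HN : forall s, dot d (g' s) (g' s) = 1).
  { intros r. specialize (HN1 r). unfold norm in HN1.
    rewrite <- (sqrt_sqrt (dot d (g' r) (g' r))) by apply dot_nonneg. rewrite HN1. ring. }
  pose proof (K_from_Delta d gamma D HDel Hpos) as HK.
  set (lam := Rext_inv D) in *.
  assert (Hl0 : 0 <= lam).
  { unfold lam; destruct D; simpl in *; [left; apply Rinv_0_lt_compat; lra| lra]. }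
  assert (Hn0 : 0 < INR n) by (apply lt_0_INR; lia).
  set (m := / INR n) in *.
  assert (Hm : 0 < m) by (apply Rinv_0_lt_compat; lra).
  replace (2 * 1 / INR n) with (2 * m) in Hts, Hut by (unfold m; field; lra).
  rewrite Rabs_right in Hts, Hut by lra.
  pose proof PI_4 as Hpi.
  assert (Hlm : lam * m <= 1/3) by lra.
  assert (Hlm0 : 0 <= lam * m) by (apply Rmult_le_pos; lra).
  set (R0 := 4 * m).
  assert (HR : 0 < R0) by (unfold R0; lra).
  assert (Hk : lam^2 * R0^2 < 2).
  { replace (lam^2 * R0^2) with (16 * ((lam * m) * (lam*m))) by (unfold R0; ring).
    assert ((lam * m) * (lam*m) <= 1/3 * (1/3)) by (apply Rmult_le_compat; lra). lra. }
  set (e := g' t).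
  pose proof (backward d gamma g' lam R0 HD HN HK HR Hk t s Hst ltac:(unfold R0; lra)) as Hb.
  pose proof (forward d gamma g' lam R0 HD HN HK Hk t u Htu ltac:(unfold R0; lra)) as Hf.
  pose proof (S_lem d gamma g' lam R0 HD HN HK t s ltac:(rewrite Rabs_left; unfold R0; lra)) as S1.
  pose proof (S_lem d gamma g' lam R0 HD HN HK t u ltac:(rewrite Rabs_right; unfold R0; lra)) as S2.
  fold e in Hb, Hf, S1, S2.
  rewrite dot_vsub_swap in S1. rewrite (dot_vsub_swap_r d e) in Hb, S1.
  replace ((- dot d e (vsub (gamma t) (gamma s)))^2) with ((dot d e (vsub (gamma t) (gamma s)))^2) in S1 by ring.
  set (v1 := vsub (gamma t) (gamma s)) in *. set (v2 := vsub (gamma u) (gamma t)) in *.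
  assert (Ha1 : 0 < dot d e v1) by lra.
  pose proof (pos_dot d e v1 v2 (lam^2 * R0^2) (HN t) Ha1 Hf Hk S1 S2) as Hp.
  pose proof (CS d e v1) as C1. pose proof (CS d e v2) as C2. unfold e in C1, C2 at 2. rewrite HN in C1, C2.
  fold e in C1, C2.
  pose proof (CS d v1 v2) as C12.
  pose proof (mvt_bound d gamma g' HD HN s t Hst) as M1.
  pose proof (mvt_bound d gamma g' HD HN t u Htu) as M2.
  fold v1 in M1. fold v2 in M2.
  set (V1 := dot d v1 v1) in *. set (V2 := dot d v2 v2) in *. set (p := dot d v1 v2) in *.
  assert (HV1 : 0 < V1).
  { assert (0 < (dot d e v1)^2) by (apply pow_lt; lra). lra. }
  assert (HV2 : 0 < V2).
  { assert (0 < (dot d e v2)^2) by (apply pow_lt; lra). lra. }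
  pose proof (HK s t u) as K3. rewrite gram_eq in K3.
  rewrite (dot_vsub_swap d (gamma s) (gamma t)), (dot_vsub_swap d (gamma t) (gamma u)) in K3.
  rewrite (dot_ext d (vsub (gamma u) (gamma s)) _ (vsub (gamma u) (gamma s)) _
     (vsub_split (gamma s) (gamma t) (gamma u)) (vsub_split (gamma s) (gamma t) (gamma u))) in K3.
  rewrite dot_add_self in K3. fold v1 v2 V1 V2 p in K3.
  unfold kappa_d, angle, norm. rewrite (dot_vsub_swap d (gamma s) (gamma t)).
  fold v1 v2 V1 V2 p.
  apply final_ineq; try lra.
  - assert (SA : sqrt V1 <= 2 * m).
    { rewrite <- (sqrt_pow2 (2*m)) by lra. apply sqrt_le_1_alt.
      assert ((t-s)^2 <= (2*m)^2) by (apply pow_incr; lra). lra. }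
    assert (SB : sqrt V2 <= 2 * m).
    { rewrite <- (sqrt_pow2 (2*m)) by lra. apply sqrt_le_1_alt.
      assert ((u-t)^2 <= (2*m)^2) by (apply pow_incr; lra). lra. }
    pose proof (sqrt_pos V1). pose proof (sqrt_pos V2).
    replace (16 * 1 ^ 2 * lam ^ 2 * / INR n ^ 2) with (lam^2 * (16 * (m * m))) by (unfold m; field; lra).
    apply Rmult_le_compat_l. apply pow2_ge_0.
    assert ((sqrt V1 + sqrt V2) * (sqrt V1 + sqrt V2) <= (4*m) * (4*m)) by (apply Rmult_le_compat; lra).
    lra.
Qed.
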